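(* Let $n\ge2$. For pairs $(\alpha,\beta)\in\{0,\dots,2^n-1\}^2$ define $y_{\alpha,\beta}(x)=(\alpha\dotplus x)\oplus(\beta\dotplus x)$ for $x\in\{0,\dots,2^n-1\}$. Say that a finite list of pairs $(\alpha^{(1)},\beta^{(1)}),\dots,(\alpha^{(m)},\beta^{(m)})$ determines $x$ modulo $2^{n-1}$ if for all $x,x'\in\{0,\dots,2^n-1\}$, $y_{\alpha^{(j)},\beta^{(j)}}(x)=y_{\alpha^{(j)},\beta^{(j)}}(x')$ for all $j=1,\dots,m$ implies $x\equiv x'\pmod{2^{n-1}}$. Let $m(n)$ be the least $m$ for which such a list of $m$ pairs exists. Then $m(2)=1$ and $m(n)=2$ for all $n>2$.
   Context: $a\dotplus b=(a+b)\bmod 2^n$; $\oplus$ is bitwise XOR of $n$-bit integers. *)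

(* Defs.v *)
From mathcomp Require Import all_boot.
From Stdlib Require Import PeanoNat.

Definition addmod (n a b : nat) : nat := (a + b) %% 2 ^ n.

Definition yab (n alpha beta x : nat) : nat :=
  Nat.lxor (addmod n alpha x) (addmod n beta x).

Definition determines (n : nat) (s : seq (nat * nat)) : Prop :=
  (forall p, p \in s -> p.1 < 2 ^ n /\ p.2 < 2 ^ n) /\
  forall x x', x < 2 ^ n -> x' < 2 ^ n ->
    (forall p, p \in s -> yab n p.1 p.2 x = yab n p.1 p.2 x') ->
    x = x' %[mod 2 ^ (n - 1)].

Definition is_min_length (n m : nat) : Prop :=
  (exists s, size s = m /\ determines n s) /\
  (forall s, determines n s -> m <= size s).

(* Main.v *)
Require Import Defs.
From mathcomp Require Import all_boot zify.

Lemma powE n : PeanoNat.Nat.pow 2 n = 2 ^ n.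
Proof. elim: n => // n IH; rewrite expnS -IH; reflexivity. Qed.

Definition bit a i := odd (a %/ 2 ^ i).
Definition carry z d i := 2 ^ i <= z %% 2 ^ i + d %% 2 ^ i.

Lemma oddE a : Nat.odd a = odd a /\ Nat.even a = ~~ odd a.
Proof.
elim: a => [|a [IH1 IH2]]; first by [].
rewrite PeanoNat.Nat.odd_succ PeanoNat.Nat.even_succ IH1 IH2 /=; by case: (odd a).
Qed.

Lemma div2E a : Nat.div2 a = a %/ 2.
Proof.
have : Nat.div2 a = a./2 /\ Nat.div2 a.+1 = a.+1./2.
  elim: a => [|a [IH1 IH2]]; first by [].
  split; first by []. by rewrite /= IH1.
by case => -> _; rewrite divn2.
Qed.

Lemma testbitE a i : Nat.testbit a i = bit a i.
Proof.
elim: i a => [|i IH] a.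
  by rewrite /= (proj1 (oddE a)) /bit expn0 divn1.
by rewrite /= IH div2E /bit expnS divnMA.
Qed.

Lemma bit_mod a i : bit a i = odd ((a %% 2 ^ i.+1) %/ 2 ^ i).
Proof.
rewrite /bit expnS -modn_divl modn2.
by case: (odd _).
Qed.

Lemma bit_modeq a b i n : i < n -> a = b %[mod 2 ^ n] -> bit a i = bit b i.
Proof.
move=> lin H; rewrite !bit_mod.
have d : 2 ^ i.+1 %| 2 ^ n by rewrite dvdn_exp2l.
by rewrite -(modn_dvdm a d) H (modn_dvdm b d).
Qed.

Lemma bit_lt a i : a < 2 ^ i -> bit a i = false.
Proof. by move=> H; rewrite /bit divn_small. Qed.

Lemma modS a i : a %% 2 ^ i.+1 = a %% 2 ^ i + 2 ^ i * bit a i.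
Proof.
have P0 : 0 < 2 ^ i by rewrite expn_gt0.
have d : 2 ^ i %| 2 ^ i.+1 by rewrite dvdn_exp2l.
rewrite bit_mod.
set r := a %% 2 ^ i.+1.
rewrite {1}(divn_eq r (2 ^ i)) /r (modn_dvdm a d) addnC mulnC.
congr (_ + 2 ^ i * _).
have : r %/ 2 ^ i < 2.
  rewrite ltn_divLR // -expnS /r ltn_mod expn_gt0 //.
rewrite /r; case: (_ %/ _) => [|[|k]] //.
Qed.

Lemma bit_add z d i : bit (z + d) i = bit z i (+) bit d i (+) carry z d i.
Proof.
have P0 : 0 < 2 ^ i by rewrite expn_gt0.
rewrite /bit /carry.
have hz := ltn_pmod z P0; have hd := ltn_pmod d P0.
set P := 2 ^ i in P0 hz hd *.
have -> : z + d = (z %/ P + d %/ P) * P + (z %% P + d %% P).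
  by rewrite {1}(divn_eq z P) {1}(divn_eq d P); nia.
rewrite divnMDl // oddD.
case: leqP => H.
  have -> : (z %% P + d %% P) %/ P = 1.
    rewrite (_ : z %% P + d %% P = 1 * P + (z %% P + d %% P - P)); last by lia.
    rewrite divnMDl // divn_small //; lia.
  by rewrite oddD; case: (odd _); case: (odd _).
by rewrite (divn_small H) oddD; case: (odd _); case: (odd _).
Qed.
Lemma carryS z d i :
  carry z d i.+1 = (2 <= bit z i + bit d i + carry z d i).
Proof.
rewrite /carry !modS expnS.
have P0 : 0 < 2 ^ i by rewrite expn_gt0.
have hz := ltn_pmod z P0; have hd := ltn_pmod d P0.
set P := 2 ^ i in P0 hz hd *.
case: (bit z i); case: (bit d i); case: leqP => H; apply/idP/idP; lia.
Qed.

Lemma yabE n a b x i : a < 2 ^ n -> b < 2 ^ n ->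
  Nat.testbit (yab n a b x) i =
  (i < n) && (bit (b + 2 ^ n - a) i (+) carry ((a + x) %% 2 ^ n) (b + 2 ^ n - a) i).
Proof.
move=> ha hb.
rewrite /yab /addmod PeanoNat.Nat.lxor_spec !testbitE !powE.
have N0 : 0 < 2 ^ n by rewrite expn_gt0.
case: (ltnP i n) => lin /=.
  set z := (a + x) %% 2 ^ n.
  rewrite (@bit_modeq ((b + x) %% 2 ^ n) (z + (b + 2 ^ n - a)) i n) //.
    rewrite bit_add; by case: (bit z i); case: (bit _ i); case: (carry _ _ _).
  rewrite modn_mod /z modnDml.
  rewrite (_ : a + x + (b + 2 ^ n - a) = (b + x) + 2 ^ n); last by lia.
  by rewrite modnDr.
have le : 2 ^ n <= 2 ^ i by rewrite leq_exp2l.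
rewrite !bit_lt //; apply: leq_trans le; exact: ltn_pmod.
Qed.

Fixpoint pat (k : nat) (b : bool) : nat :=
  if k is k'.+1 then b + 2 * pat k' (~~ b) else 0.

Lemma pat_lt k b : pat k b < 2 ^ k.
Proof. elim: k b => [|k IH] b //=. rewrite expnS. have := IH (~~ b). case: b => /=; lia. Qed.

Lemma pat_bit k b i : i < k -> bit (pat k b) i = b (+) odd i.
Proof.
elim: k b i => [|k IH] b [|i] //= H.
  rewrite /bit expn0 divn1 oddD oddM /=. by case: b.
rewrite /bit expnS divnMA.
have -> : (b + 2 * pat k (~~ b)) %/ 2 = pat k (~~ b).
  rewrite addnC mulnC divnMDl // (@divn_small b) ?addn0 //; by case: b.
rewrite -/(bit _ _) IH //. by case: b; case: (odd i).
Qed.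
Lemma carry0 z d : carry z d 0 = false.
Proof. by rewrite /carry expn0 !modn1. Qed.

Lemma recover m D D' z z' :
  (forall i, i < m -> bit D i = ~~ odd i /\ bit D' i = odd i) ->
  (forall i, i <= m -> carry z D i = carry z' D i /\ carry z D' i = carry z' D' i) ->
  z %% 2 ^ m = z' %% 2 ^ m.
Proof.
move=> Hb Hc.
have inv : forall i, i < m ->
    ~~ ((carry z D i == bit D i) && (carry z D' i == ~~ bit D i)).
  elim=> [|i IH] lt.
    by rewrite carry0 (proj1 (Hb 0 lt)).
  have IH' := IH (ltnW lt).
  have [b1 b1'] := Hb i (ltnW lt); have [b2 b2'] := Hb i.+1 lt.
  move: IH'; rewrite !carryS b2 b1 b1' /=.
  case: (odd i); case: (bit z i); case: (carry z D i); case: (carry z D' i) => //.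
suff: forall i, i <= m -> z %% 2 ^ i = z' %% 2 ^ i by apply.
elim=> [|i IH] le; first by rewrite !expn0 !modn1.
rewrite modS (modS z') IH ?(ltnW le) //.
congr (_ + _ * _).
have I := inv i le.
have [b1 b1'] := Hb i le.
have [c1 c1'] := Hc i (ltnW le).
have [c2 c2'] := Hc i.+1 le.
move: I c2 c2'; rewrite !carryS c1 c1' b1 b1' /=.
case: (odd i); case: (bit z i); case: (bit z' i); case: (carry z' D i); case: (carry z' D' i) => //.
Qed.
Lemma upper n : 1 < n ->
  determines n [:: (0, pat (n - 1) true); (0, pat (n - 1) false)].
Proof.
move=> n1; rewrite /determines !powE.
have N0 : 0 < 2 ^ n by rewrite expn_gt0.
have hp : forall b, pat (n - 1) b < 2 ^ n.
  move=> b; apply: (leq_trans (pat_lt _ b)); rewrite leq_exp2l //; lia.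
split.
  move=> p; rewrite !inE => /orP [] /eqP -> /=; by split.
move=> x x' hx hx' H.
have key : forall b i, i < n ->
    carry x (pat (n - 1) b + 2 ^ n - 0) i = carry x' (pat (n - 1) b + 2 ^ n - 0) i.
  move=> b i lin.
  have H1 : (0, pat (n - 1) b) \in [:: (0, pat (n - 1) true); (0, pat (n - 1) false)].
    by case: b; rewrite !inE eqxx ?orbT.
  have := H _ H1; move/(f_equal (fun y => Nat.testbit y i)).
  rewrite /= !yabE // lin /= !add0n !modn_small //.
  by case: (bit _ _); case: (carry _ _ _); case: (carry _ _ _).
apply: (@recover (n - 1) (pat (n - 1) true + 2 ^ n - 0) (pat (n - 1) false + 2 ^ n - 0)).
  move=> i lt.
  have lin : i < n by lia.
  have e : forall b, bit (pat (n - 1) b + 2 ^ n - 0) i = bit (pat (n - 1) b) i.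
    by move=> b; apply: (@bit_modeq _ _ i n lin); rewrite subn0 modnDr.
  rewrite !e !pat_bit //.
move=> i le; split; apply: key; lia.
Qed.

Lemma carry_small D z z' : z < 4 -> z' < 4 ->
  (2 <= z %% 2 + D %% 2) = (2 <= z' %% 2 + D %% 2) ->
  (forall R Q, 0 < Q -> R < 4 * Q -> R %% 4 = D %% 4 -> (4 * Q <= z + R) = (4 * Q <= z' + R)) ->
  forall i, carry z D i = carry z' D i.
Proof.
move=> hz hz' H2 H4 [|[|i]]; first by rewrite !carry0.
  by rewrite /carry expn1.
rewrite /carry.
have Q0 : 0 < 2 ^ i by rewrite expn_gt0.
have -> : 2 ^ i.+2 = 4 * 2 ^ i by rewrite !expnS mulnA.
rewrite !(@modn_small z) ?(@modn_small z'); try lia.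
apply: H4 => //; first by rewrite ltn_pmod // muln_gt0.
by rewrite (@modn_dvdm (4 * 2 ^ i)) // dvdn_mulr.
Qed.

Lemma lower_one n a b : 2 < n -> a < 2 ^ n -> b < 2 ^ n ->
  exists x x', [/\ x < 2 ^ n, x' < 2 ^ n, yab n a b x = yab n a b x' &
                   ~ (x = x' %[mod 2 ^ (n - 1)])].
Proof.
move=> n2 ha hb.
have N8 : 8 <= 2 ^ n by rewrite (_ : 8 = 2 ^ 3) // leq_exp2l.
have M4 : 4 <= 2 ^ (n - 1) by rewrite (_ : 4 = 2 ^ 2) // leq_exp2l //; lia.
have MN : 2 ^ (n - 1) %| 2 ^ n by rewrite dvdn_exp2l // leq_subr.
have N0 : 0 < 2 ^ n by lia.
set D := b + 2 ^ n - a.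
suff [z [z' [hz hz' nz hc]]] : exists z z', [/\ z < 4, z' < 4, z != z' &
    forall i, carry z D i = carry z' D i].
  have az : forall z, z < 4 -> (a + (z + 2 ^ n - a) %% 2 ^ n) %% 2 ^ n = z.
    move=> w hw; rewrite modnDmr (_ : a + (w + 2 ^ n - a) = w + 2 ^ n); last by lia.
    by rewrite modnDr modn_small //; lia.
  exists ((z + 2 ^ n - a) %% 2 ^ n), ((z' + 2 ^ n - a) %% 2 ^ n).
  split; [exact: ltn_pmod | exact: ltn_pmod | |].
    apply: PeanoNat.Nat.bits_inj => i.
    by rewrite !yabE // !az // hc.
  move=> E.
  have : (a + (z + 2 ^ n - a) %% 2 ^ n) %% 2 ^ (n - 1) =
         (a + (z' + 2 ^ n - a) %% 2 ^ n) %% 2 ^ (n - 1).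
    by rewrite -modnDmr E modnDmr.
  rewrite -(modn_dvdm (a + (z + 2 ^ n - a) %% 2 ^ n) MN) -(modn_dvdm (a + (z' + 2 ^ n - a) %% 2 ^ n) MN) !az //.
  have l1 : z < 2 ^ (n - 1) by apply: leq_trans M4.
  have l2 : z' < 2 ^ (n - 1) by apply: leq_trans M4.
  rewrite (modn_small l1) (modn_small l2).
  by move/eqP; rewrite (negbTE nz).
have D4 : D %% 4 < 4 by rewrite ltn_mod.
have D2 : D %% 2 = (D %% 4) %% 2 by rewrite modn_dvdm.
case E : (D %% 4) D4 D2 => [|[|[|[|r]]]] // _ D2.
- exists 0, 1; split => //; apply: carry_small => //; try by rewrite D2.
  move=> R Q Q0 RQ RE; apply/idP/idP; lia.
- exists 0, 2; split => //; apply: carry_small => //; try by rewrite D2.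
  move=> R Q Q0 RQ RE; apply/idP/idP; lia.
- exists 0, 1; split => //; apply: carry_small => //; try by rewrite D2.
  move=> R Q Q0 RQ RE; apply/idP/idP; lia.
- exists 1, 3; split => //; apply: carry_small => //; try by rewrite D2.
  move=> R Q Q0 RQ RE; apply/idP/idP; lia.
Qed.
Lemma nonempty n : 1 < n -> determines n [::] -> False.
Proof.
move=> n1 [_ H].
have M2 : 2 <= 2 ^ (n - 1) by rewrite (_ : 2 = 2 ^ 1) // leq_exp2l //; lia.
have N2 : 2 <= 2 ^ n by rewrite (_ : 2 = 2 ^ 1) // leq_exp2l //; lia.
have := H 0 1; rewrite !powE => /(_ (leq_trans (isT : 0 < 2) N2) (leq_trans (isT : 1 < 2) N2)).
move=> /(_ (fun p (hp : p \in [::]) => False_ind _ (notF hp))).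
rewrite mod0n modn_small //.
Qed.

Lemma det2 : determines 2 [:: (0, 1)].
Proof.
split.
  by move=> p; rewrite inE => /eqP -> /=; vm_compute.
move=> x x' hx hx' H; have := H (0, 1) (mem_head _ _) => /=; clear H.
move: hx hx'; vm_compute.
case: x => [|[|[|[|x]]]] // _; case: x' => [|[|[|[|x']]]] // _; vm_compute; done.
Qed.

Theorem proposition4 :
  is_min_length 2 1 /\ (forall n : nat, 2 < n -> is_min_length n 2).
Proof.
split.
  split; first by exists [:: (0, 1)]; split => //; exact: det2.
  move=> [|p s] D //; by case: (@nonempty 2 isT D).
move=> n n2; split.
  exists [:: (0, pat (n - 1) true); (0, pat (n - 1) false)]; split => //.
  apply: upper; lia.
move=> [|p [|q s]] D //.
  exfalso; apply: (@nonempty n _ D); lia.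
have [ha hb] := D.1 p (mem_head _ _).
rewrite powE in ha hb.
have [x [x' [hx hx' E NE]]] := @lower_one n _ _ n2 ha hb.
exfalso; apply: NE; rewrite -powE; apply: D.2; rewrite ?powE //.
by move=> r; rewrite inE => /eqP ->.
Qed.
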